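(* Let $x$ be a stable g-matching with $x\ne x^{\max}$, let $f\in F$, and let $(a,c)$ be a legal $f$-pair under $x$. Then (i) $c\in U_F^-(x)$; (ii) $x_f\prec_f x_f+\mathbf 1^a-\mathbf 1^c$; and (iii) $c$ is not interesting for $f$ under $x_f+\mathbf 1^a-\mathbf 1^c$.
   Context: Let $G=(V,E)$ be a finite bipartite graph with color classes $W$ and $F$; the edge joining $w\in W$ and $f\in F$ is written $wf$. Let $b\in\mathbb Z_+^E$ be capacities. For $v\in V$, $E_v$ is the set of edges at $v$, $\mathcal B_v=\{z\in\mathbb Z_+^{E_v}: z\le b|_{E_v}\}$, $\mathbf 1^e$ the unit vector of $e$, $|z|=\sum_e|z(e)|$, $\wedge,\vee$ componentwise min/max. Each $v$ has a choice function $C_v:\mathcal B_v\to\mathcal B_v$ with $C_v(z)\le z$ and, for all $z,z'$: (A1) $z\ge z'\ge C_v(z)\Rightarrow C_v(z')=C_v(z)$; (A2) $z\ge z'\Rightarrow C_v(z)\wedge z'\le C_v(z')$; (A3) $z\ge z'\Rightarrow|C_v(z)|\ge|C_v(z')|$. $z$ is acceptable if $C_v(z)=z$; for distinct acceptable $z,z'$, $z'\prec_v z$ iff $C_v(z\vee z')=z$. $x_v$ = restriction of $x$ to $E_v$. A g-matching is $x\in\mathbb Z_+^E$, $x\le b$, each $x_v$ acceptable; $x\prec_F y$ (distinct) iff $x_f\preceq_f y_f$ for all $f\in F$. $e\in E_v$ is interesting for $v$ under acceptable $z$ if some $z'\in\mathcal B_v$ has $z'(e)>z(e)$, $z'(e')=z(e')$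 for $e'\neq e$, $C_v(z')(e)>z(e)$; $e=wf$ is interesting for $v\in\{w,f\}$ under a g-matching $x$ if so under $x_v$, and blocks $x$ if interesting for both endpoints; stable g-matchings (no blocking edge) form a finite lattice under $\prec_F$ with maximum $x^{\max}$. For stable $x$: $U_F^+(x)$ is the set of edges $wf$ interesting for $f$ under $x$; $U_F^-(x)$ is the set of edges $wf$ with $x(wf)>0$ not interesting for $f$ under $x$. A legal $f$-pair under $x$ is $(a,c)$ with $a\in U_F^+(x)\cap E_f$, $c\in E_f\setminus\{a\}$ and $C_f(x_f+\mathbf 1^a)=x_f+\mathbf 1^a-\mathbf 1^c$. *)

(* Defs.v *)
From mathcomp Require Import all_boot.
Set Implicit Arguments. Unset Strict Implicit. Unset Printing Implicit Defensive.

(* Bipartite graph: color classes W and F (finite types); an edge wf is a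
   pair (w,f) : W * F; the edge set is E : {set W * F}.  Vertices are W + F.
   Vectors in Z_+^E (or Z_+^{E_v}) are represented by functions
   W * F -> nat that vanish outside E (resp. E_v). *)

Definition vec (W F : finType) := {ffun W * F -> nat}.

Definition atv (W F : finType) (E : {set W * F}) (v : W + F) (e : W * F) : bool :=
  (e \in E) && match v with inl w => e.1 == w | inr f => e.2 == f end.

Definition inB (W F : finType) (E : {set W * F}) (b : W * F -> nat)
  (v : W + F) (z : vec W F) : Prop :=
  forall e, z e <= b e /\ (~~ atv E v e -> z e = 0).

Definition vle (W F : finType) (z z' : vec W F) : Prop := forall e, z e <= z' e.
Definition vmin (W F : finType) (z z' : vec W F) : vec W F := [ffun e => minn (z e) (z' e)].
Definition vmax (W F : finType) (z z' : vec W F) : vec W F := [ffun e => maxn (z e) (z' e)].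
Definition vadd (W F : finType) (z z' : vec W F) : vec W F := [ffun e => z e + z' e].
(* truncated componentwise subtraction (only used where it is exact) *)
Definition vsub (W F : finType) (z z' : vec W F) : vec W F := [ffun e => z e - z' e].
Definition vsize (W F : finType) (z : vec W F) : nat := \sum_e z e.
Definition unitv (W F : finType) (a : W * F) : vec W F := [ffun e => nat_of_bool (e == a)].

Definition restr (W F : finType) (E : {set W * F}) (v : W + F) (x : vec W F) : vec W F :=
  [ffun e => if atv E v e then x e else 0].

Record choice_system (W F : finType) (E : {set W * F}) (b : W * F -> nat)
  (C : W + F -> vec W F -> vec W F) : Prop := {
  cs_dom : forall v z, inB E b v z -> inB E b v (C v z);
  cs_le  : forall v z, inB E b v z -> vle (C v z) z;
  cs_A1  : forall v z z', inB E b v z -> inB E b v z' ->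
             vle z' z -> vle (C v z) z' -> C v z' = C v z;
  cs_A2  : forall v z z', inB E b v z -> inB E b v z' ->
             vle z' z -> vle (vmin (C v z) z') (C v z');
  cs_A3  : forall v z z', inB E b v z -> inB E b v z' ->
             vle z' z -> vsize (C v z') <= vsize (C v z)
}.


Definition acceptable (W F : finType) (E : {set W * F}) (b : W * F -> nat)
  (C : W + F -> vec W F -> vec W F) (v : W + F) (z : vec W F) : Prop :=
  inB E b v z /\ C v z = z.

(* prec .. v z' z  :  z' ≺_v z  (distinct acceptable z, z' with C_v(z ∨ z') = z) *)
Definition prec (W F : finType) (E : {set W * F}) (b : W * F -> nat)
  (C : W + F -> vec W F -> vec W F) (v : W + F) (z' z : vec W F) : Prop :=
  [/\ acceptable E b C v z, acceptable E b C v z', z != z' & C v (vmax z z') = z].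

Definition preceq (W F : finType) (E : {set W * F}) (b : W * F -> nat)
  (C : W + F -> vec W F -> vec W F) (v : W + F) (z' z : vec W F) : Prop :=
  z' = z \/ prec E b C v z' z.

Definition gmatching (W F : finType) (E : {set W * F}) (b : W * F -> nat)
  (C : W + F -> vec W F -> vec W F) (x : vec W F) : Prop :=
  [/\ forall e, x e <= b e,
      forall e, e \notin E -> x e = 0
    & forall v, acceptable E b C v (restr E v x)].

Definition interesting (W F : finType) (E : {set W * F}) (b : W * F -> nat)
  (C : W + F -> vec W F -> vec W F) (v : W + F) (z : vec W F) (e : W * F) : Prop :=
  atv E v e /\
  exists z', [/\ inB E b v z', z e < z' e,
                 (forall e', e' != e -> z' e' = z e') & z e < C v z' e].

Definition blocks (W F : finType) (E : {set W * F}) (b : W * F -> nat)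
  (C : W + F -> vec W F -> vec W F) (x : vec W F) (e : W * F) : Prop :=
  interesting E b C (inl e.1) (restr E (inl e.1) x) e /\
  interesting E b C (inr e.2) (restr E (inr e.2) x) e.

Definition stable (W F : finType) (E : {set W * F}) (b : W * F -> nat)
  (C : W + F -> vec W F -> vec W F) (x : vec W F) : Prop :=
  gmatching E b C x /\ forall e, e \in E -> ~ blocks E b C x e.

Definition leF (W F : finType) (E : {set W * F}) (b : W * F -> nat)
  (C : W + F -> vec W F -> vec W F) (x y : vec W F) : Prop :=
  forall f : F, preceq E b C (inr f) (restr E (inr f) x) (restr E (inr f) y).

Definition is_max_stable (W F : finType) (E : {set W * F}) (b : W * F -> nat)
  (C : W + F -> vec W F -> vec W F) (xm : vec W F) : Prop :=
  stable E b C xm /\ forall y, stable E b C y -> leF E b C y xm.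

Definition UFplus (W F : finType) (E : {set W * F}) (b : W * F -> nat)
  (C : W + F -> vec W F -> vec W F) (x : vec W F) (e : W * F) : Prop :=
  e \in E /\ interesting E b C (inr e.2) (restr E (inr e.2) x) e.

Definition UFminus (W F : finType) (E : {set W * F}) (b : W * F -> nat)
  (C : W + F -> vec W F -> vec W F) (x : vec W F) (e : W * F) : Prop :=
  [/\ e \in E, 0 < x e & ~ interesting E b C (inr e.2) (restr E (inr e.2) x) e].

(* (a,c) is a legal f-pair under x.  The identity
   C_f(x_f + 1^a) = x_f + 1^a - 1^c  (in Z^E) is written additively in nat as
   C_f(x_f + 1^a) + 1^c = x_f + 1^a. *)
Definition legal_pair (W F : finType) (E : {set W * F}) (b : W * F -> nat)
  (C : W + F -> vec W F -> vec W F) (x : vec W F) (f : F) (a c : W * F) : Prop :=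
  [/\ UFplus E b C x a, atv E (inr f) a, atv E (inr f) c, c != a &
      vadd (C (inr f) (vadd (restr E (inr f) x) (unitv a))) (unitv c)
      = vadd (restr E (inr f) x) (unitv a)].

(* Main.v *)
Require Import Defs.
From mathcomp Require Import all_boot.
From mathcomp Require Import zify.

Lemma vsizeD (W F : finType) (u v : vec W F) : vsize (vadd u v) = vsize u + vsize v.
Proof. by rewrite /vsize -big_split; apply: eq_bigr => e _; rewrite ffunE. Qed.

Lemma vsize1 (W F : finType) (c : W * F) : vsize (unitv c) = 1.
Proof.
rewrite /vsize (bigD1 c) //= ffunE eqxx big1 // => e /negbTE.
by rewrite ffunE => ->.
Qed.

Lemma vsize_le (W F : finType) (u v : vec W F) : vle u v -> vsize u <= vsize v.
Proof. by move=> h; apply: leq_sum => e _. Qed.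

Lemma core (W F : finType) (E : {set W * F}) (b : W * F -> nat)
  (C : W + F -> vec W F -> vec W F) (HC : choice_system E b C) v (z z' : vec W F) c :
  inB E b v z -> inB E b v z' -> vadd (C v z) (unitv c) = z ->
  (forall e, e != c -> z' e <= z e) ->
  vle (vmin (C v z) z') (C v z') /\ vsize (C v z') <= vsize (C v z).
Proof.
move=> Hz Hz' Heq Hle.
have Hpt e : C v z e + (e == c) = z e.
  by have := congr1 (fun g : vec W F => g e) Heq; rewrite !ffunE.
pose w := vmax z z'.
have Hw : inB E b v w.
  move=> e; rewrite /w ffunE; case: (Hz e) => h1 h2; case: (Hz' e) => h3 h4.
  split; first by rewrite geq_max h1 h3.
  by move=> /[dup] /h2 -> /h4 ->.
have zw : vle z w by move=> e; rewrite ffunE leq_maxl.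
have z'w : vle z' w by move=> e; rewrite ffunE leq_maxr.
have Cwz : vle (C v w) z.
  move=> e; case: (eqVneq e c) => [->|ne].
  - have h0 := cs_A2 HC Hw Hz zw; move: (h0 c); rewrite ffunE.
    have := Hpt c; rewrite eqxx => h; lia.
  - apply: leq_trans (cs_le HC Hw e) _.
    by rewrite /w ffunE geq_max leqnn Hle.
have EC : C v z = C v w := cs_A1 HC Hw Hz zw Cwz.
rewrite EC; split.
  exact: (cs_A2 HC Hw Hz' z'w).
exact: (cs_A3 HC Hw Hz' z'w).
Qed.

Arguments core {W F E b C} HC {v z z' c}.

Theorem lemma3p2 (W F : finType) (E : {set W * F}) (b : W * F -> nat)
  (C : W + F -> vec W F -> vec W F) (HC : choice_system E b C)
  (x xmax : vec W F) (Hx : stable E b C x) (Hmax : is_max_stable E b C xmax)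
  (Hne : x <> xmax) (f : F) (a c : W * F) (Hac : legal_pair E b C x f a c) :
  let xf := restr E (inr f) x in
  let y := vsub (vadd xf (unitv a)) (unitv c) in
  [/\ UFminus E b C x c,
      prec E b C (inr f) xf y
    & ~ interesting E b C (inr f) y c].
Proof.
move=> xf y.
case: Hac => [[aE Hai] af cf ca Heq].
have a2f : a.2 = f by move: af => /andP [_ /eqP].
have c2f : c.2 = f by move: cf => /andP [_ /eqP].
rewrite a2f in Hai.
case: Hx => [[_ _ Hacc] _].
have xfE e : xf e = if atv E (inr f) e then x e else 0 by rewrite /xf ffunE.
pose z := vadd xf (unitv a).
have zE e : z e = xf e + (e == a) by rewrite /z ffunE [unitv a e]ffunE.
have Hpt e : C (inr f) z e + (e == c) = xf e + (e == a).
  by have := congr1 (fun g : vec W F => g e) Heq; rewrite ffunE [unitv c e]ffunE => ->; exact: zE.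
have Hz : inB E b (inr f) z.
  case: Hai => _ [z0 [Hz0 lt0 eq0 _]] e.
  have le0 : z e <= z0 e.
    rewrite zE; case: (eqVneq e a) => [->|ne]; first by rewrite addn1.
    by rewrite (eq0 e ne) addn0.
  case: (Hz0 e) => h1 _; split; first exact: leq_trans le0 h1.
  move=> nat; rewrite zE xfE (negbTE nat).
  case: (eqVneq e a) => // ea; by rewrite ea af in nat.
have Hy : y = C (inr f) z.
  rewrite /y; apply/ffunP => e; rewrite ffunE [unitv c e]ffunE -/z zE.
  have := Hpt e; case: (e == c); case: (e == a) => /=; lia.
have szC : vsize (C (inr f) z) = vsize xf.
  have := congr1 (fun g : vec W F => vsize g) Heq; rewrite !vsizeD !vsize1 -/xf -/z; lia.
have szz : vsize z = vsize xf + 1 by rewrite /z vsizeD vsize1.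
have Hptc : C (inr f) z c + 1 = xf c by have := Hpt c; rewrite eqxx (negbTE ca) addn0 => <-.
split.
- split.
  + by move: cf => /andP [].
  + have : 0 < xf c by lia.
    by rewrite xfE cf.
  + rewrite c2f -/xf => [[_ [z'' [Hz'' lt eq Clt]]]].
    have Hle'' e : e != c -> z'' e <= z e by move=> ne; rewrite eq // zE leq_addr.
    have [Hmin Hsz] := core HC Hz Hz'' Heq Hle''.
    have : vle (vadd xf (unitv c)) (C (inr f) z'').
      move=> e; rewrite ffunE [unitv c e]ffunE; case: (eqVneq e c) => [->|ne].
      * by rewrite ?eqxx addn1.
      * rewrite ?(negbTE ne) addn0.
        have := Hmin e; rewrite ffunE (eq e ne).
        have := Hpt e; rewrite ?(negbTE ne); lia.
    move=> /vsize_le; rewrite vsizeD vsize1; lia.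
- split.
  + rewrite Hy; split; first exact: cs_dom HC _ _ Hz.
    exact: (cs_A1 HC Hz (cs_dom HC Hz) (cs_le HC Hz) (fun e => leqnn _)).
  + exact: Hacc.
  + apply/eqP => h; have := congr1 (fun g : vec W F => g a) h.
    rewrite Hy; have := Hpt a; rewrite eqxx eq_sym (negbTE ca); lia.
  + rewrite Hy; congr (C _ _); apply/ffunP => e; rewrite ffunE zE.
    have := Hpt e; case: (eqVneq e c) => [->|ne].
    * rewrite ?eqxx (negbTE ca); lia.
    * rewrite ?(negbTE ne); lia.
- rewrite Hy => [[_ [z' [Hz' lt eq Clt]]]].
  have Hle' e : e != c -> z' e <= z e.
    by move=> ne; rewrite eq //; exact: (cs_le HC Hz e).
  have [Hmin Hsz] := core HC Hz Hz' Heq Hle'.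
  have : vle z (C (inr f) z').
    move=> e; case: (eqVneq e c) => [->|ne].
    * rewrite zE; have := Hpt c; rewrite eqxx (negbTE ca); lia.
    * have := Hmin e; rewrite ffunE (eq e ne) minnn.
      rewrite zE; have := Hpt e; rewrite ?(negbTE ne); lia.
  move=> /vsize_le; lia.
Qed.
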